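(* Let $\mathscr{H}$ be a complex Hilbert space and let $N(\cdot)$ be a norm on $\mathbb{B}(\mathscr{H})$. Then the function $w_{(N,e)}(\cdot,\cdot):\mathbb{B}^2(\mathscr{H})\to[0,\infty)$ defined by $$w_{(N,e)}(B,C)=\sup_{\lambda_1,\lambda_2\in\mathbb{C},\ |\lambda_1|^2+|\lambda_2|^2\leq 1}\ \sup_{\theta\in\mathbb{R}} N\left(\Re\left(e^{i\theta}(\lambda_1B+\lambda_2C)\right)\right)$$ is a norm on $\mathbb{B}^2(\mathscr{H})=\mathbb{B}(\mathscr{H})\times\mathbb{B}(\mathscr{H})$ (with componentwise addition and scalar multiplication).
   Context: $\mathbb{B}(\mathscr{H})$ denotes the algebra of bounded linear operators on $\mathscr{H}$. For $T\in\mathbb{B}(\mathscr{H})$, $\Re(T)=\frac12(T+T^* )$. *)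

(* Defs.v *)
From HB Require Import structures.
From Stdlib Require Import ClassicalEpsilon.
From mathcomp Require Import all_boot all_order all_algebra.
From mathcomp Require Import all_classical all_reals.
From mathcomp Require Import trigo.
From mathcomp Require Import complex.

Set Implicit Arguments.
Unset Strict Implicit.
Unset Printing Implicit Defensive.
Import Order.TTheory GRing.Theory Num.Theory.
Local Open Scope ring_scope.
Local Open Scope classical_set_scope.

Definition cabs (R : realType) (z : R[i]) : R := ComplexField.Normc.normc z.

Section Hilbert.
Variables (R : realType) (V : lmodType R[i]) (ip : V -> V -> R[i]).

Definition hnorm (x : V) : R := Num.sqrt (complex.Re (ip x x)).

Record is_hilbert : Prop := {
  ip_linear : forall (a : R[i]) (x y z : V), ip (a *: x + y) z = a * ip x z + ip y z;
  ip_conj : forall x y : V, ip y x = conjc (ip x y);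
  ip_pos : forall x : V, 0 <= ip x x;
  ip_def : forall x : V, ip x x = 0 -> x = 0;
  ip_complete : forall u : nat -> V,
    (forall e : R, 0 < e -> exists N : nat, forall m n : nat,
        (N <= m)%N -> (N <= n)%N -> hnorm (u m - u n) < e) ->
    exists l : V, forall e : R, 0 < e -> exists N : nat, forall n : nat,
        (N <= n)%N -> hnorm (u n - l) < e }.

Definition bounded_linear (T : V -> V) : Prop :=
  (forall (a : R[i]) (x y : V), T (a *: x + y) = a *: T x + T y) /\
  (exists M : R, forall x : V, hnorm (T x) <= M * hnorm x).

Definition opadd (T S : V -> V) : V -> V := fun x => T x + S x.
Definition opscale (a : R[i]) (T : V -> V) : V -> V := fun x => a *: T x.
Definition opzero : V -> V := fun _ => 0.

Definition adjoint (T : V -> V) : V -> V :=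
  epsilon (inhabits T) (fun S : V -> V => forall x y : V, ip (T x) y = ip x (S y)).

Definition ReOp (T : V -> V) : V -> V :=
  opscale (2^-1) (opadd T (adjoint T)).

Definition is_norm_BH (N : (V -> V) -> R) : Prop :=
  [/\ (forall T, bounded_linear T -> 0 <= N T),
      (forall T, bounded_linear T -> N T = 0 -> T = opzero),
      (forall a T, bounded_linear T -> N (opscale a T) = cabs a * N T)
    & (forall T S, bounded_linear T -> bounded_linear S ->
          N (opadd T S) <= N T + N S)].

Definition expi (t : R) : R[i] := Complex (cos t) (sin t).

Definition theta_set (N : (V -> V) -> R) (l1 l2 : R[i]) (B C : V -> V) : set R :=
  [set N (ReOp (opscale (expi t) (opadd (opscale l1 B) (opscale l2 C)))) | t in [set: R]].

Definition lambda_set (N : (V -> V) -> R) (B C : V -> V) : set R :=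
  [set r | exists l1 l2 : R[i],
     cabs l1 ^+ 2 + cabs l2 ^+ 2 <= 1 /\ r = sup (theta_set N l1 l2 B C)].

Definition wNe (N : (V -> V) -> R) (B C : V -> V) : R := sup (lambda_set N B C).

Definition is_norm_BH2 (N : (V -> V) -> R) (w : (V -> V) -> (V -> V) -> R) : Prop :=
  [/\ (forall B C, bounded_linear B -> bounded_linear C -> 0 <= w B C),
      (forall B C, bounded_linear B -> bounded_linear C -> w B C = 0 ->
          B = opzero /\ C = opzero),
      (forall a B C, bounded_linear B -> bounded_linear C ->
          w (opscale a B) (opscale a C) = cabs a * w B C)
    & (forall B1 C1 B2 C2, bounded_linear B1 -> bounded_linear C1 ->
          bounded_linear B2 -> bounded_linear C2 ->
          w (opadd B1 B2) (opadd C1 C2) <= w B1 C1 + w B2 C2)].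

End Hilbert.

(* Main.v *)
Require Import Defs.
From HB Require Import structures.
From Stdlib Require Import ClassicalEpsilon.
From mathcomp Require Import all_boot all_order all_algebra.
From mathcomp Require Import all_classical all_reals.
From mathcomp Require Import trigo complex.
From mathcomp Require Import ring lra.
Import Order.TTheory GRing.Theory Num.Theory.
Local Open Scope ring_scope.
Local Open Scope classical_set_scope.
Local Open Scope complex_scope.
Set Implicit Arguments.
Unset Strict Implicit.
Unset Printing Implicit Defensive.

Section Hil.
Variables (R : realType) (V : lmodType R[i]) (ip : V -> V -> R[i]).
Hypothesis Hh : is_hilbert ip.

Local Notation "z ^*" := (conjc z) : ring_scope.

Local Notation Rc := (@complex.Re R).
Local Notation Ic := (@complex.Im R).
Lemma eqC (a b : R[i]) : Rc a = Rc b -> Ic a = Ic b -> a = b.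
Proof. by case: a b => a1 a2 [b1 b2] /= -> ->. Qed.

Lemma conjD (a b : R[i]) : (a + b)^* = a^* + b^*.
Proof. by case: a b => a1 a2 [b1 b2]; apply: eqC => /=; ring. Qed.
Lemma conjM (a b : R[i]) : (a * b)^* = a^* * b^*.
Proof. by case: a b => a1 a2 [b1 b2]; apply: eqC => /=; ring. Qed.
Lemma conjN (a : R[i]) : (- a)^* = - a^*.
Proof. by case: a => a1 a2; apply: eqC => /=; ring. Qed.
Lemma conjK (a : R[i]) : a^*^* = a.
Proof. by case: a => a1 a2; apply: eqC => /=; ring. Qed.
Lemma conjR (r : R) : (r%:C)^* = r%:C.
Proof. by apply: eqC => /=; ring. Qed.

Lemma ipDl x y z : ip (x + y) z = ip x z + ip y z.
Proof. by have := ip_linear Hh 1 x y z; rewrite scale1r mul1r. Qed.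
Lemma ip0l z : ip 0 z = 0.
Proof. by apply: (addrI (ip 0 z)); rewrite addr0 -ipDl addr0. Qed.

Lemma ipZl a x z : ip (a *: x) z = a * ip x z.
Proof. by have := ip_linear Hh a x 0 z; rewrite addr0 ip0l addr0. Qed.
Lemma ipNl x z : ip (- x) z = - ip x z.
Proof. by rewrite -scaleN1r ipZl mulN1r. Qed.
Lemma ipBl x y z : ip (x - y) z = ip x z - ip y z.
Proof. by rewrite ipDl ipNl. Qed.
Lemma ipC x y : ip y x = (ip x y)^*.
Proof. exact: (ip_conj Hh). Qed.
Lemma ipDr x y z : ip z (x + y) = ip z x + ip z y.
Proof. by rewrite ipC ipDl conjD -!ipC. Qed.
Lemma ipZr a x z : ip z (a *: x) = a^* * ip z x.
Proof. by rewrite ipC ipZl conjM -!ipC. Qed.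
Lemma ip0r z : ip z 0 = 0.
Proof. by rewrite ipC ip0l conjc0. Qed.
Lemma ipNr x z : ip z (- x) = - ip z x.
Proof. by rewrite ipC ipNl conjN -!ipC. Qed.
Lemma ipBr x y z : ip z (x - y) = ip z x - ip z y.
Proof. by rewrite ipDr ipNr. Qed.

Definition nrm2 x := Rc (ip x x).
Lemma ipxx x : ip x x = (nrm2 x)%:C.
Proof. by rewrite /nrm2; have := ip_pos Hh x; case: (ip x x) => a b; rewrite lecE /= => /andP[/eqP -> _]. Qed.
Lemma nrm2_ge0 x : 0 <= nrm2 x.
Proof. by rewrite /nrm2; have := ip_pos Hh x; case: (ip x x) => a b; rewrite lecE /= => /andP[_]. Qed.
Lemma nrm2_eq0 x : nrm2 x = 0 -> x = 0.
Proof. by move=> h; apply: (ip_def Hh); rewrite ipxx h. Qed.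
Lemma hnorm_ge0 x : 0 <= hnorm ip x.
Proof. exact: sqrtr_ge0. Qed.
Lemma hnorm2 x : hnorm ip x ^+ 2 = nrm2 x.
Proof. by rewrite /hnorm sqr_sqrtr // nrm2_ge0. Qed.

Definition csq (z : R[i]) := Rc z ^+ 2 + Ic z ^+ 2.
Lemma csq_ge0 z : 0 <= csq z.
Proof. by rewrite /csq addr_ge0 // sqr_ge0. Qed.
Lemma cabsE z : cabs z = Num.sqrt (csq z).
Proof. by case: z. Qed.
Lemma cabs_ge0 (z : R[i]) : 0 <= cabs z.
Proof. by rewrite cabsE sqrtr_ge0. Qed.
Lemma cabs2 (z : R[i]) : cabs z ^+ 2 = csq z.
Proof. by rewrite cabsE sqr_sqrtr // csq_ge0. Qed.
Lemma csq_eq0 z : csq z = 0 -> z = 0.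
Proof.
case: z => a b; rewrite /csq /= => h; apply: eqC => /=.
  by apply/eqP; rewrite -sqrf_eq0; apply/eqP; nra.
by apply/eqP; rewrite -sqrf_eq0; apply/eqP; nra.
Qed.

Lemma nrm2_sub x y t : nrm2 (x - t *: y) =
  nrm2 x - 2 * Rc (t^* * ip x y) + csq t * nrm2 y.
Proof.
rewrite /nrm2 ipBl !ipBr !ipZl !ipZr (ipC x y) !ipxx.
case: (ip x y) => c1 c2; case: t => t1 t2 /=.
rewrite /csq /=; ring.
Qed.

Lemma nrm2_subs x y s : nrm2 (x - (s%:C * ip x y) *: y) =
  nrm2 x - 2 * s * csq (ip x y) + s ^+ 2 * csq (ip x y) * nrm2 y.
Proof.
rewrite nrm2_sub; case: (ip x y) => c1 c2; rewrite /csq /=; ring.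
Qed.


Lemma nrm2_add x y : nrm2 (x + y) = nrm2 x + nrm2 y + 2 * Rc (ip x y).
Proof.
rewrite /nrm2 ipDl !ipDr (ipC x y) !ipxx.
case: (ip x y) => c1 c2 /=; ring.
Qed.

Lemma nrm2_scale a x : nrm2 (a *: x) = csq a * nrm2 x.
Proof.
rewrite /nrm2 ipZl ipZr ipxx; case: a => a1 a2 /=; rewrite /csq /=; ring.
Qed.

Lemma ip_sep u v : (forall z, ip z u = ip z v) -> u = v.
Proof.
move=> h; apply/eqP; rewrite -subr_eq0; apply/eqP; apply: nrm2_eq0.
by rewrite /nrm2 ipBr h subrr.
Qed.

Lemma CS x y : csq (ip x y) <= nrm2 x * nrm2 y.
Proof.
have [n0|npos] := eqVneq (nrm2 y) 0.
  by rewrite n0 mulr0 (nrm2_eq0 n0) ip0r /csq /= expr0n /= addr0.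
have ngt0 : 0 < nrm2 y by rewrite lt_def npos nrm2_ge0.
have h := nrm2_ge0 (x - (((nrm2 y)^-1)%:C * ip x y) *: y).
rewrite nrm2_subs in h.
have e : (nrm2 y)^-1 * nrm2 y = 1 by rewrite mulVf.
have := csq_ge0 (ip x y); have := nrm2_ge0 x.
move: h e ngt0; set s := (nrm2 y)^-1; set c := csq _; set n := nrm2 y; set m := nrm2 x.
move=> h e ngt0 m0 c0.
have h2 : 0 <= m - s * c by nra.
nra.
Qed.

Lemma sq_le (a b : R) : 0 <= b -> a ^+ 2 <= b ^+ 2 -> a <= b.
Proof. move=> b0 h; nra. Qed.

Lemma cabs_ip x y : cabs (ip x y) <= hnorm ip x * hnorm ip y.
Proof.
apply: sq_le; first by rewrite mulr_ge0 // hnorm_ge0.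
by rewrite cabs2 exprMn !hnorm2 CS.
Qed.

Lemma Re_le_cabs z : Rc z <= cabs z.
Proof. apply: sq_le; first exact: cabs_ge0. rewrite cabs2 /csq; nra. Qed.

Lemma Re_ip_le x y : Rc (ip x y) <= hnorm ip x * hnorm ip y.
Proof. exact: le_trans (Re_le_cabs _) (cabs_ip _ _). Qed.

Lemma hnormD x y : hnorm ip (x + y) <= hnorm ip x + hnorm ip y.
Proof.
apply: sq_le; first by rewrite addr_ge0 // hnorm_ge0.
rewrite hnorm2 nrm2_add sqrrD !hnorm2.
have := Re_ip_le x y; lra.
Qed.

Lemma hnormZ a x : hnorm ip (a *: x) = cabs a * hnorm ip x.
Proof. by rewrite /hnorm -/(nrm2 _) nrm2_scale sqrtrM ?csq_ge0 // cabsE. Qed.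

Lemma hnormN x : hnorm ip (- x) = hnorm ip x.
Proof. by rewrite -scaleN1r hnormZ cabsE /csq /= oppr0 expr0n /= addr0 sqrrN expr1n sqrtr1 mul1r. Qed.

Lemma hnormB x y : hnorm ip (x - y) = hnorm ip (y - x).
Proof. by rewrite -hnormN opprB. Qed.


Lemma eps_le (x y C : R) : 0 < C ->
  (forall e, 0 < e -> e <= 1 -> x <= y + C * e) -> x <= y.
Proof.
move=> C0 h; apply/ler_addgt0Pr => e e0.
have m0 : 0 < Num.min (e / C) 1 by rewrite lt_min ltr01 divr_gt0.
have m1 : Num.min (e/C) 1 <= 1 by rewrite ge_min lexx orbT.
have m2 : Num.min (e/C) 1 <= e/C by rewrite ge_min lexx.
apply: (le_trans (h _ m0 m1)).
rewrite lerD2l; apply: le_trans (ler_wpM2l (ltW C0) m2) _.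
by rewrite mulrC divfK ?gt_eqF.
Qed.

Lemma invS_le (N m : nat) : (N <= m)%N -> m.+1%:R^-1 <= N.+1%:R^-1 :> R.
Proof. by move=> h; rewrite lef_pV2 ?posrE ?ltr0n // ler_nat ltnS. Qed.

Lemma invS_gt0 (m : nat) : 0 < m.+1%:R^-1 :> R.
Proof. by rewrite invr_gt0 ltr0n. Qed.

Lemma sq_lt (a b : R) : 0 <= b -> 0 <= a -> a ^+ 2 < b ^+ 2 -> a < b.
Proof. move=> b0 a0 h; nra. Qed.

Lemma cabs_eq0 (z : R[i]) : cabs z <= 0 -> z = 0.
Proof.
move=> h; apply: csq_eq0; apply/eqP; rewrite eq_le csq_ge0 andbT.
by rewrite -sqrtr_eq0 -cabsE eq_le h cabs_ge0.
Qed.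


Lemma nrm2N x : nrm2 (- x) = nrm2 x.
Proof. by rewrite /nrm2 ipNl ipNr opprK. Qed.
Lemma ReN (z : R[i]) : Rc (- z) = - Rc z.
Proof. by case: z. Qed.

Section Riesz.
Variable f : V -> R[i].
Hypothesis flin : forall a x y, f (a *: x + y) = a * f x + f y.
Variable K : R.
Hypothesis K0 : 0 < K.
Hypothesis fb : forall x, cabs (f x) <= K * hnorm ip x.

Lemma f0 : f 0 = 0.
Proof.
have := flin 1 0 0; rewrite scaler0 addr0 mul1r => h.
by apply: (addrI (f 0)); rewrite addr0 -h.
Qed.
Lemma fD x y : f (x + y) = f x + f y.
Proof. by have := flin 1 x y; rewrite scale1r mul1r. Qed.
Lemma fZ a x : f (a *: x) = a * f x.
Proof. by have := flin a x 0; rewrite !addr0 f0 addr0. Qed.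
Lemma fB x y : f (x - y) = f x - f y.
Proof. by rewrite -scaleN1r fD fZ mulN1r. Qed.

Lemma half2 : (2^-1 : R)%:C * (1 + 1) = 1 :> R[i].
Proof. by apply: eqC => /=; field. Qed.


Lemma riesz_K : exists z, forall x, f x = ip x z.
Proof.
have [allz|] := pselect (forall x, f x = 0).
  by exists 0 => x; rewrite allz ip0r.
move=> /existsNP [x0 fx0].
pose S := [set x | f x = 1].
have x1S : S ((f x0)^-1 *: x0) by rewrite /S /= fZ mulVf //; apply/eqP.
pose E := [set nrm2 x | x in S].
have hinf : has_inf E.
  split; first by exists (nrm2 ((f x0)^-1 *: x0)); exists ((f x0)^-1 *: x0).
  by exists 0 => r [x _ <-]; exact: nrm2_ge0.
set d := inf E.
have d0 : 0 <= d.
  by apply: lb_le_inf; [exact: hinf.1 | move=> r [x _ <-]; exact: nrm2_ge0].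
have dle : forall x, S x -> d <= nrm2 x.
  by move=> x Sx; apply: (ge_inf hinf.2); exists x.
have : forall n : nat, exists x, S x /\ nrm2 x < d + n.+1%:R^-1.
  move=> n; have [r [x Sx <-] h] := inf_adherent (invS_gt0 n) hinf.
  by exists x.
move=> /choice [u hu].
have par : forall x y, S x -> S y -> nrm2 (x - y) <= 2 * nrm2 x + 2 * nrm2 y - 4 * d.
  move=> x y Sx Sy.
  have Sm : S ((2^-1 : R)%:C *: (x + y)) by rewrite /S /= fZ fD Sx Sy half2.
  have := dle _ Sm; rewrite nrm2_scale /csq /= expr0n /= addr0.
  have e1 := nrm2_add x y; have e2 := nrm2_add x (- y).
  rewrite ipNr nrm2N ReN in e2.
  have h4 : (2^-1 : R) ^+ 2 = 4^-1 by rewrite expr2 -invfM; congr (_^-1); ring.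
  rewrite h4 => h.
  lra.
have cauchy : forall e : R, 0 < e -> exists N : nat, forall m n : nat,
    (N <= m)%N -> (N <= n)%N -> hnorm ip (u m - u n) < e.
  move=> e e0.
  have e20 : 0 < e ^+ 2 / 4 by rewrite divr_gt0 // exprn_gt0.
  have [k hk] := ltr_add_invr e20; rewrite add0r in hk.
  exists k => m n km kn.
  apply: sq_lt; [exact: ltW e0 | exact: hnorm_ge0 | rewrite hnorm2].
  have := par _ _ (hu m).1 (hu n).1; have := (hu m).2; have := (hu n).2.
  have := invS_le km; have := invS_le kn.
  have : e ^+ 2 / 4 * 4 = e ^+ 2 by field.
  move=> q1 q2 q3 q4 q5 q6.
  move: q1 q2 q3 q4 q5 q6 hk; set a := n.+1%:R^-1; set b := m.+1%:R^-1; set c := k.+1%:R^-1; set E2 := e ^+ 2 => q1 q2 q3 q4 q5 q6 hk.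
  lra.
have [l hl] := ip_complete Hh cauchy.
have lS : S l.
  rewrite /S /=; apply/eqP; rewrite -subr_eq0; apply/eqP; apply: cabs_eq0.
  apply/ler_addgt0Pr => e e0; rewrite add0r.
  have [N hN] := hl (e / K) (divr_gt0 e0 K0).
  have h := hN N (leqnn N).
  have -> : f l - 1 = f (l - u N) by rewrite fB (hu N).1.
  apply: le_trans (fb _) _; rewrite hnormB.
  have h2 : K * hnorm ip (u N - l) <= K * (e / K) by rewrite ler_pM2l // ltW.
  by rewrite mulrCA mulfV ?gt_eqF // mulr1 in h2.
have nl_le : nrm2 l <= d.
  apply: (@eps_le _ _ (2 * d + 6)); first lra.
  move=> e e0 e1.
  have [N hN] := hl e e0.
  have [k hk] := ltr_add_invr e0; rewrite add0r in hk.
  pose n := maxn N k.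
  have hv := hN n (leq_maxl N k); rewrite hnormB in hv.
  have hkn := invS_le (leq_maxr N k).
  have hun := (hu n).2.
  have e3 : nrm2 l = nrm2 (u n) + nrm2 (l - u n) + 2 * Rc (ip (u n) (l - u n)).
    by rewrite -nrm2_add addrCA subrr addr0.
  have re := Re_ip_le (u n) (l - u n).
  have hv0 := hnorm_ge0 (l - u n); have hu0 := hnorm_ge0 (u n).
  have hv2 := hnorm2 (l - u n); have hu2 := hnorm2 (u n).
  move: hkn hun hk; set a := n.+1%:R^-1; set c := k.+1%:R^-1 => hkn hun hk.
  have nv : nrm2 (l - u n) <= e by rewrite -hv2; nra.
  have hub : hnorm ip (u n) <= d + 2 by nra.
  have hp : hnorm ip (u n) * hnorm ip (l - u n) <= (d + 2) * e by nra.
  lra.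
have orth : forall k, f k = 0 -> ip l k = 0.
  move=> k fk; set c := ip l k; pose s := (nrm2 k + 1)^-1.
  have Sk : S (l - (s%:C * c) *: k) by rewrite /S /= fB fZ fk mulr0 subr0 lS.
  have := dle _ Sk; rewrite nrm2_subs -/c => h.
  have nk0 := nrm2_ge0 k; have c0 := csq_ge0 c.
  have hk1 : 0 < nrm2 k + 1 by lra.
  have s0 : 0 < s by rewrite invr_gt0.
  have se : s * (nrm2 k + 1) = 1 by rewrite /s mulVf ?gt_eqF.
  apply: csq_eq0; apply/eqP; rewrite eq_le c0 andbT.
  move: h se s0 c0 nk0; set t := csq c; set r := nrm2 k => h se s0 c0 nk0.
  have sr : s * r = 1 - s by rewrite mulrDr mulr1 in se; lra.
  have h1 : s ^+ 2 * t * r = s * t - s * (s * t).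
    have -> : s * t - s * (s * t) = s * t * (1 - s) by ring.
    by rewrite -sr; ring.
  rewrite h1 in h.
  have p0 : s * t <= 0 by nra.
  nra.
have nl0 : nrm2 l != 0.
  apply/eqP => /nrm2_eq0 l0; move: lS; rewrite /S /= l0 f0.
  by move=> /esym/eqP; rewrite oner_eq0.
exists ((nrm2 l)^-1%:C *: l) => x.
have h0 := orth (x - f x *: l).
rewrite fB fZ lS mulr1 subrr in h0; have {}h0 := h0 erefl.
rewrite ipBr ipZr ipxx in h0.
have e1 : ip l x = (f x)^* * (nrm2 l)%:C by apply/eqP; rewrite -subr_eq0 h0.
rewrite ipZr conjR (ipC l x) e1 conjM conjK conjR.
move: nl0; case: (f x) => a b; set n := nrm2 l => nl0.
by apply: eqC => /=; field.
Qed.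
End Riesz.

Lemma riesz (f : V -> R[i]) : (forall a x y, f (a *: x + y) = a * f x + f y) ->
  (exists M, forall x, cabs (f x) <= M * hnorm ip x) ->
  exists z, forall x, f x = ip x z.
Proof.
move=> fl [M hM]; apply: (@riesz_K f fl (`|M| + 1)).
  by rewrite ltr_wpDl.
move=> x; apply: le_trans (hM x) _; apply: ler_wpM2r; first exact: hnorm_ge0.
by apply: le_trans (ler_norm M) _; rewrite lerDl.
Qed.

Lemma bl_pos T : bounded_linear ip T ->
  exists2 M, 0 <= M & forall x, hnorm ip (T x) <= M * hnorm ip x.
Proof.
move=> [_ [M hM]]; exists `|M|; first exact: normr_ge0.
move=> x; apply: le_trans (hM x) _; apply: ler_wpM2r; first exact: hnorm_ge0.
exact: ler_norm.
Qed.

Lemma adj_ex T : bounded_linear ip T ->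
  exists S : V -> V, forall x y, ip (T x) y = ip x (S y).
Proof.
move=> hT; have [M M0 hM] := bl_pos hT; have [Tl _] := hT.
have : forall y, exists z, forall x, ip (T x) y = ip x z.
  move=> y; apply: riesz.
    by move=> a x x'; rewrite Tl ipDl ipZl.
  exists (M * hnorm ip y) => x; apply: le_trans (cabs_ip _ _) _.
  rewrite mulrAC; apply: ler_wpM2r; [exact: hnorm_ge0 | exact: hM].
by move=> /choice [S hS]; exists S.
Qed.

Lemma adjP T : bounded_linear ip T ->
  forall x y, ip (T x) y = ip x (adjoint ip T y).
Proof.
move=> hT; rewrite /adjoint.
exact: (epsilon_spec (inhabits T) (fun S : V -> V => forall x y, ip (T x) y = ip x (S y)) (adj_ex hT)).
Qed.

Lemma adj_uniq T S : bounded_linear ip T ->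
  (forall x y, ip (T x) y = ip x (S y)) -> adjoint ip T = S.
Proof.
move=> hT h; apply: funext => y; apply: ip_sep => z.
by rewrite -adjP // h.
Qed.

Lemma bl_add T S : bounded_linear ip T -> bounded_linear ip S ->
  bounded_linear ip (opadd T S).
Proof.
move=> hT hS; have [M1 M10 h1] := bl_pos hT; have [M2 M20 h2] := bl_pos hS.
have [Tl _] := hT; have [Sl _] := hS.
split.
  by move=> a x y; rewrite /opadd Tl Sl scalerDr addrACA.
exists (M1 + M2) => x; rewrite /opadd mulrDl.
by apply: le_trans (hnormD _ _) _; apply: lerD.
Qed.

Lemma bl_scale a T : bounded_linear ip T -> bounded_linear ip (opscale a T).
Proof.
move=> hT; have [M M0 h] := bl_pos hT; have [Tl _] := hT.
split.
  by move=> b x y; rewrite /opscale Tl scalerDr !scalerA mulrC.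
exists (cabs a * M) => x; rewrite /opscale hnormZ -mulrA.
by apply: ler_wpM2l; [exact: cabs_ge0 | exact: h].
Qed.

Lemma bl_adj T : bounded_linear ip T -> bounded_linear ip (adjoint ip T).
Proof.
move=> hT; have [M M0 h] := bl_pos hT; have [Tl _] := hT.
have aP := adjP hT.
split.
  move=> a y y'; apply: ip_sep => z.
  by rewrite -aP ipDr ipZr ipDr ipZr -!aP.
exists M => y.
set S := adjoint ip T.
have h1 : nrm2 (S y) <= hnorm ip (T (S y)) * hnorm ip y.
  by rewrite /nrm2 -aP; apply: Re_ip_le.
have h2 : hnorm ip (T (S y)) * hnorm ip y <= M * hnorm ip (S y) * hnorm ip y.
  by apply: ler_wpM2r; [exact: hnorm_ge0 | exact: h].
have := hnorm2 (S y); have := hnorm_ge0 (S y); have := hnorm_ge0 y.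
move: h1 h2; set p := hnorm ip (S y); set q := hnorm ip y; set n := nrm2 (S y).
move=> h1 h2 q0 p0 pn.
have hm : p ^+ 2 <= (M * q) * p by rewrite pn; apply: le_trans h1 _; apply: le_trans h2 _; rewrite mulrAC.
have m0 : 0 <= M * q by rewrite mulr_ge0.
move: hm m0; set m := M * q => hm m0.
nra.
Qed.

Lemma adjD T S : bounded_linear ip T -> bounded_linear ip S ->
  adjoint ip (opadd T S) = opadd (adjoint ip T) (adjoint ip S).
Proof.
move=> hT hS; apply: adj_uniq; first exact: bl_add.
by move=> x y; rewrite /opadd ipDl ipDr !adjP.
Qed.

Lemma adjZ a T : bounded_linear ip T ->
  adjoint ip (opscale a T) = opscale (a^*) (adjoint ip T).
Proof.
move=> hT; apply: adj_uniq; first exact: bl_scale.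
by move=> x y; rewrite /opscale ipZl ipZr conjK adjP.
Qed.

Lemma bl_Re T : bounded_linear ip T -> bounded_linear ip (ReOp ip T).
Proof. by move=> hT; apply: bl_scale; apply: bl_add => //; exact: bl_adj. Qed.

Lemma ReD T S : bounded_linear ip T -> bounded_linear ip S ->
  ReOp ip (opadd T S) = opadd (ReOp ip T) (ReOp ip S).
Proof.
move=> hT hS; rewrite /ReOp adjD //; apply: funext => x.
by rewrite /opscale /opadd -scalerDr addrACA.
Qed.

Lemma ReZr (r : R) T : bounded_linear ip T ->
  ReOp ip (opscale (r%:C) T) = opscale (r%:C) (ReOp ip T).
Proof.
move=> hT; rewrite /ReOp adjZ // conjR; apply: funext => x.
by rewrite /opscale /opadd -scalerDr !scalerA mulrC.
Qed.


Lemma cabs_expi (t : R) : cabs (expi t) = 1.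
Proof. by rewrite cabsE /csq /= cos2Dsin2 sqrtr1. Qed.
Lemma cabs_conj (z : R[i]) : cabs (z^*) = cabs z.
Proof. by rewrite !cabsE /csq; case: z => a b /=; rewrite sqrrN. Qed.
Lemma cabsM (x y : R[i]) : cabs (x * y) = cabs x * cabs y.
Proof. exact: ComplexField.Normc.normcM. Qed.
Lemma cabsV (x : R[i]) : cabs (x^-1) = (cabs x)^-1.
Proof. exact: ComplexField.Normc.normcV. Qed.
Lemma cabsR (r : R) : 0 <= r -> cabs (r%:C) = r.
Proof. by move=> r0; rewrite cabsE /csq /= expr0n /= addr0 sqrtr_sqr ger0_norm. Qed.
Lemma cabs0 : cabs (0 : R[i]) = 0.
Proof. exact: ComplexField.Normc.normc0. Qed.
Lemma cabs1 : cabs (1 : R[i]) = 1.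
Proof. exact: ComplexField.Normc.normc1. Qed.
Lemma ball_le1 (l1 l2 : R[i]) : cabs l1 ^+ 2 + cabs l2 ^+ 2 <= 1 -> cabs l1 <= 1 /\ cabs l2 <= 1.
Proof.
move=> h; have := cabs_ge0 l1; have := cabs_ge0 l2.
move: h; set a := cabs l1; set b := cabs l2 => h a0 b0; split; nra.
Qed.

Lemma sup_scale (r : R) (E : set R) : 0 <= r -> has_sup E ->
  sup [set r * x | x in E] = r * sup E.
Proof.
move=> r0 hE; have [[x0 Ex0] _] := hE.
have [->|rn0] := eqVneq r 0.
  rewrite mul0r (_ : [set 0 * x | x in E] = [set 0]) ?sup1 //.
  apply/seteqP; split => y /=; first by move=> [x _ <-]; rewrite mul0r.
  by move=> ->; exists x0 => //; rewrite mul0r.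
have rp : 0 < r by rewrite lt_def rn0.
have ne : [set r * x | x in E] !=set0 by exists (r * x0), x0.
have hrE : has_sup [set r * x | x in E].
  split => //; exists (r * sup E) => y [x Ex <-].
  by rewrite ler_pM2l //; apply: sup_upper_bound.
apply/eqP; rewrite eq_le; apply/andP; split.
  apply: ge_sup => // y [x Ex <-]; rewrite ler_pM2l //; exact: sup_upper_bound.
rewrite -ler_pdivlMl //; apply: ge_sup => //; first by exists x0.
move=> x Ex; rewrite ler_pdivlMl //; apply: sup_upper_bound => //.
by exists x.
Qed.

Section Main.
Variable N : (V -> V) -> R.
Hypothesis hN : is_norm_BH ip N.

Definition Xop (l1 l2 : R[i]) (B C : V -> V) (t : R) :=
  opscale (expi t) (opadd (opscale l1 B) (opscale l2 C)).

Lemma thetaE l1 l2 B C :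
  theta_set ip N l1 l2 B C = [set N (ReOp ip (Xop l1 l2 B C t)) | t in [set: R]].
Proof. by []. Qed.

Lemma Nge0 T : bounded_linear ip T -> 0 <= N T.
Proof. by case: hN => h _ _ _; exact: h. Qed.
Lemma Ndef T : bounded_linear ip T -> N T = 0 -> T = @opzero R V.
Proof. by case: hN => _ h _ _; exact: h. Qed.
Lemma NZ a T : bounded_linear ip T -> N (opscale a T) = cabs a * N T.
Proof. by case: hN => _ _ h _; exact: h. Qed.
Lemma Ntri T S : bounded_linear ip T -> bounded_linear ip S -> N (opadd T S) <= N T + N S.
Proof. by case: hN => _ _ _ h; exact: h. Qed.

Lemma bl_X l1 l2 B C t : bounded_linear ip B -> bounded_linear ip C ->
  bounded_linear ip (Xop l1 l2 B C t).
Proof. by move=> hB hC; apply: bl_scale; apply: bl_add; apply: bl_scale. Qed.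

Lemma N_comb e l1 l2 B C : bounded_linear ip B -> bounded_linear ip C ->
  cabs e = 1 -> cabs l1 <= 1 -> cabs l2 <= 1 ->
  N (opscale e (opadd (opscale l1 B) (opscale l2 C))) <= N B + N C.
Proof.
move=> hB hC he h1 h2.
rewrite NZ; last by apply: bl_add; apply: bl_scale.
rewrite he mul1r; apply: le_trans (Ntri (bl_scale _ hB) (bl_scale _ hC)) _.
rewrite !NZ //; apply: lerD.
  by rewrite -[leRHS]mul1r; apply: ler_wpM2r => //; exact: Nge0.
by rewrite -[leRHS]mul1r; apply: ler_wpM2r => //; exact: Nge0.
Qed.

Definition Kb B C := cabs (2^-1 : R[i]) *
  (N B + N C + N (adjoint ip B) + N (adjoint ip C)).

Lemma theta_bound l1 l2 B C t : bounded_linear ip B -> bounded_linear ip C ->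
  cabs l1 ^+ 2 + cabs l2 ^+ 2 <= 1 ->
  N (ReOp ip (Xop l1 l2 B C t)) <= Kb B C.
Proof.
move=> hB hC hl; have [h1 h2] := ball_le1 hl.
have hX := bl_X l1 l2 t hB hC.
rewrite /ReOp NZ; last by apply: bl_add => //; exact: bl_adj.
rewrite /Kb; apply: ler_wpM2l; first exact: cabs_ge0.
apply: le_trans (Ntri hX (bl_adj hX)) _.
rewrite -addrA; apply: lerD; first exact: N_comb (cabs_expi t) h1 h2.
rewrite /Xop adjZ; last by apply: bl_add; apply: bl_scale.
rewrite adjD; try by apply: bl_scale.
rewrite !adjZ //.
apply: N_comb; try exact: bl_adj.
- by rewrite cabs_conj cabs_expi.
- by rewrite cabs_conj.
- by rewrite cabs_conj.
Qed.


Lemma ball0 : cabs (0 : R[i]) ^+ 2 + cabs (0 : R[i]) ^+ 2 <= 1.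
Proof. by rewrite cabs0 expr0n /= addr0 ler01. Qed.

Lemma theta_has_sup l1 l2 B C : bounded_linear ip B -> bounded_linear ip C ->
  cabs l1 ^+ 2 + cabs l2 ^+ 2 <= 1 -> has_sup (theta_set ip N l1 l2 B C).
Proof.
move=> hB hC hl; rewrite thetaE; split; first by exists (N (ReOp ip (Xop l1 l2 B C 0))), 0.
by exists (Kb B C) => y [t _ <-]; exact: theta_bound.
Qed.

Lemma N_le_theta l1 l2 B C t : bounded_linear ip B -> bounded_linear ip C ->
  cabs l1 ^+ 2 + cabs l2 ^+ 2 <= 1 ->
  N (ReOp ip (Xop l1 l2 B C t)) <= sup (theta_set ip N l1 l2 B C).
Proof.
move=> hB hC hl; apply: sup_upper_bound; first exact: theta_has_sup.
by rewrite thetaE; exists t.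
Qed.

Lemma lambda_has_sup B C : bounded_linear ip B -> bounded_linear ip C ->
  has_sup (lambda_set ip N B C).
Proof.
move=> hB hC; split.
  by exists (sup (theta_set ip N 0 0 B C)), 0, 0; split => //; exact: ball0.
exists (Kb B C) => y [l1 [l2 [hl ->]]].
apply: ge_sup; first by rewrite thetaE; exists (N (ReOp ip (Xop l1 l2 B C 0))), 0.
by rewrite thetaE => z [t _ <-]; exact: theta_bound.
Qed.

Lemma theta_le_w l1 l2 B C : bounded_linear ip B -> bounded_linear ip C ->
  cabs l1 ^+ 2 + cabs l2 ^+ 2 <= 1 ->
  sup (theta_set ip N l1 l2 B C) <= wNe ip N B C.
Proof.
move=> hB hC hl; apply: sup_upper_bound; first exact: lambda_has_sup.
by exists l1, l2.
Qed.

Lemma w_ge0 B C : bounded_linear ip B -> bounded_linear ip C -> 0 <= wNe ip N B C.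
Proof.
move=> hB hC; apply: le_trans (theta_le_w hB hC ball0).
apply: le_trans (N_le_theta 0 hB hC ball0).
by apply: Nge0; apply: bl_Re; exact: bl_X.
Qed.

Lemma inv2_neq0 : (2^-1 : R[i]) != 0.
Proof. by rewrite invr_eq0 pnatr_eq0. Qed.

Lemma Re_zero_all Y : bounded_linear ip Y ->
  (forall t, ReOp ip (opscale (expi t) Y) = @opzero R V) -> Y = @opzero R V.
Proof.
move=> hY h; apply: funext => x.
have e0 := congr1 (fun F => F x) (h 0).
have e1 := congr1 (fun F => F x) (h (pi / 2)).
  have ex0 : expi (0 : R) = 1 by rewrite /expi cos0 sin0.
have exi : expi (pi / 2 : R) = Complex 0 1 by rewrite /expi cos_pihalf sin_pihalf.
have ci : (Complex 0 1 : R[i])^* = - Complex 0 1 by apply: eqC; rewrite /= ?oppr0.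
rewrite /ReOp adjZ // in e0; rewrite /ReOp adjZ // in e1; rewrite /opscale /opadd /opzero in e0 e1.
rewrite ex0 conjc1 !scale1r in e0; rewrite exi ci scaleNr in e1.
move: e0 e1; set b := adjoint ip Y x => e0 e1.
move/eqP: e0; rewrite scaler_eq0 (negbTE inv2_neq0) /= => /eqP e0.
move/eqP: e1; rewrite scaler_eq0 (negbTE inv2_neq0) /= -scalerBr scaler_eq0.
have -> : (Complex 0 1 : R[i]) == 0 = false by apply/eqP => /(congr1 (@complex.Im R)) /= /eqP; rewrite oner_eq0.
move=> /= /eqP e1.
have : Y x + Y x = 0 by rewrite -[RHS]addr0 -{1}e0 -e1 addrACA subrr addr0.
rewrite -mulr2n -scaler_nat => /eqP; rewrite scaler_eq0 pnatr_eq0 /=.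
by move/eqP.
Qed.


Lemma ball10 : cabs (1 : R[i]) ^+ 2 + cabs (0 : R[i]) ^+ 2 <= 1.
Proof. by rewrite cabs0 cabs1 expr0n /= addr0 expr1n. Qed.
Lemma ball01 : cabs (0 : R[i]) ^+ 2 + cabs (1 : R[i]) ^+ 2 <= 1.
Proof. by rewrite cabs0 cabs1 expr0n /= add0r expr1n. Qed.

Lemma w_def B C : bounded_linear ip B -> bounded_linear ip C ->
  wNe ip N B C = 0 -> B = @opzero R V /\ C = @opzero R V.
Proof.
move=> hB hC w0.
have key : forall l1 l2 t, cabs l1 ^+ 2 + cabs l2 ^+ 2 <= 1 ->
    ReOp ip (Xop l1 l2 B C t) = @opzero R V.
  move=> l1 l2 t hl; apply: Ndef; first by apply: bl_Re; exact: bl_X.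
  apply/eqP; rewrite eq_le; apply/andP; split; last first.
    by apply: Nge0; apply: bl_Re; exact: bl_X.
  rewrite -w0; apply: le_trans (theta_le_w hB hC hl).
  exact: N_le_theta.
split.
  apply: Re_zero_all => // t; rewrite -(key 1 0 t ball10).
  by congr (ReOp ip _); apply: funext => x; rewrite /Xop /opscale /opadd scale1r scale0r addr0.
apply: Re_zero_all => // t; rewrite -(key 0 1 t ball01).
by congr (ReOp ip _); apply: funext => x; rewrite /Xop /opscale /opadd scale1r scale0r add0r.
Qed.

Lemma X_add l1 l2 B1 C1 B2 C2 t :
  Xop l1 l2 (opadd B1 B2) (opadd C1 C2) t = opadd (Xop l1 l2 B1 C1 t) (Xop l1 l2 B2 C2 t).
Proof.
apply: funext => x; rewrite /Xop /opscale /opadd !scalerDr.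
by rewrite addrACA.
Qed.

Lemma w_tri B1 C1 B2 C2 : bounded_linear ip B1 -> bounded_linear ip C1 ->
  bounded_linear ip B2 -> bounded_linear ip C2 ->
  wNe ip N (opadd B1 B2) (opadd C1 C2) <= wNe ip N B1 C1 + wNe ip N B2 C2.
Proof.
move=> hB1 hC1 hB2 hC2.
have hB := bl_add hB1 hB2; have hC := bl_add hC1 hC2.
apply: ge_sup; first by have [] := lambda_has_sup hB hC.
move=> y [l1 [l2 [hl ->]]].
apply: ge_sup; first by have [] := theta_has_sup hB hC hl.
rewrite thetaE => z [t _ <-].
rewrite X_add ReD; try exact: bl_X.
apply: le_trans (Ntri (bl_Re (bl_X l1 l2 t hB1 hC1)) (bl_Re (bl_X l1 l2 t hB2 hC2))) _.
apply: lerD.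
  by apply: le_trans (theta_le_w hB1 hC1 hl); exact: N_le_theta.
by apply: le_trans (theta_le_w hB2 hC2 hl); exact: N_le_theta.
Qed.


Lemma X_split (r : R) (u a l1 l2 : R[i]) B C t : a = r%:C * u ->
  Xop l1 l2 (opscale a B) (opscale a C) t = opscale r%:C (Xop (l1 * u) (l2 * u) B C t).
Proof.
move=> ha; apply: funext => x; rewrite /Xop /opscale /opadd ha !scalerDr !scalerA.
by congr (_ *: _ + _ *: _); ring.
Qed.

Lemma ball_mul (l1 l2 u : R[i]) : cabs u = 1 ->
  cabs l1 ^+ 2 + cabs l2 ^+ 2 <= 1 -> cabs (l1 * u) ^+ 2 + cabs (l2 * u) ^+ 2 <= 1.
Proof. by move=> hu; rewrite !cabsM hu !mulr1. Qed.

Lemma theta_scale (r : R) (u a l1 l2 : R[i]) B C :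
  bounded_linear ip B -> bounded_linear ip C -> 0 <= r -> a = r%:C * u ->
  theta_set ip N l1 l2 (opscale a B) (opscale a C) =
  [set r * x | x in theta_set ip N (l1 * u) (l2 * u) B C].
Proof.
move=> hB hC r0 ha.
have E : forall t, N (ReOp ip (Xop l1 l2 (opscale a B) (opscale a C) t)) =
    r * N (ReOp ip (Xop (l1 * u) (l2 * u) B C t)).
  move=> t; rewrite (X_split _ _ _ _ _ ha) ReZr; last exact: bl_X.
  by rewrite NZ ?cabsR //; apply: bl_Re; exact: bl_X.
rewrite !thetaE; apply/seteqP; split => y /=.
  by move=> [t _ <-]; rewrite E; exists (N (ReOp ip (Xop (l1 * u) (l2 * u) B C t))) => //; exists t.
by move=> [x [t _ <-] <-]; exists t => //; rewrite E.
Qed.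

Lemma w_scale a B C : bounded_linear ip B -> bounded_linear ip C ->
  wNe ip N (opscale a B) (opscale a C) = cabs a * wNe ip N B C.
Proof.
move=> hB hC.
set r := cabs a.
have r0 : 0 <= r := cabs_ge0 a.
pose u := if a == 0 then 1 else a / r%:C.
have [ha hu] : a = r%:C * u /\ cabs u = 1.
  rewrite /u; case: eqP => [a0|/eqP an0].
    by rewrite /r a0 cabs0 mulr1 cabs1.
  have rn0 : r != 0 by apply/eqP => h; move/eqP: an0; apply; apply: cabs_eq0; rewrite -/r h.
  have rCn0 : r%:C != 0.
    by apply/eqP => /(congr1 (@complex.Re R)) /= h; move/eqP: rn0.
  split; first by rewrite mulrCA mulfV // mulr1.
  by rewrite cabsM cabsV cabsR // mulfV.
have un0 : u != 0 by apply/eqP => h; move: hu; rewrite h cabs0 => /eqP; rewrite eq_sym oner_eq0.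
rewrite /wNe -sup_scale //; last exact: lambda_has_sup.
congr sup; apply/seteqP; split => y /=.
  move=> [l1 [l2 [hl ->]]].
  have hl' := ball_mul hu hl.
  exists (sup (theta_set ip N (l1 * u) (l2 * u) B C)); first by exists (l1 * u), (l2 * u).
  by rewrite (theta_scale l1 l2 hB hC r0 ha) sup_scale //; exact: theta_has_sup.
move=> [x [m1 [m2 [hm ->]]] <-].
exists (m1 / u), (m2 / u); split.
  by rewrite !cabsM cabsV hu invr1 !mulr1.
rewrite (theta_scale (m1 / u) (m2 / u) hB hC r0 ha) sup_scale //; last first.
  by apply: theta_has_sup => //; rewrite !divfK.
by rewrite !divfK.
Qed.

End Main.
End Hil.

Unset Implicit Arguments.

Theorem theorem2p2 (R : realType) (V : lmodType R[i]) (ip : V -> V -> R[i])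
  (N : (V -> V) -> R) :
  is_hilbert ip -> is_norm_BH ip N ->
  (forall B C : V -> V, bounded_linear ip B -> bounded_linear ip C ->
     (forall l1 l2 : R[i], cabs l1 ^+ 2 + cabs l2 ^+ 2 <= 1 ->
        has_sup (theta_set ip N l1 l2 B C)) /\
     has_sup (lambda_set ip N B C)) /\
  is_norm_BH2 ip N (wNe ip N).
Proof.
move=> Hh hN; split.
  move=> B C hB hC; split.
    by move=> l1 l2 hl; exact: (theta_has_sup Hh hN hB hC hl).
  exact: (lambda_has_sup Hh hN hB hC).
split.
- by move=> B C hB hC; exact: (w_ge0 Hh hN hB hC).
- by move=> B C hB hC; exact: (w_def Hh hN hB hC).
- by move=> a B C hB hC; exact: (w_scale Hh hN a hB hC).
- by move=> B1 C1 B2 C2 hB1 hC1 hB2 hC2; exact: (w_tri Hh hN hB1 hC1 hB2 hC2).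
Qed.
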